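(* For every positive integer $n$, $$\sum_{j=1}^{n}\csc^8\left(\frac{\pi j}{2n+1}\right) = \frac{128(n+1)n(n^2+n+3)(3n^4+6n^3+7n^2+4n+15)}{14175}.$$ *)

(* Defs.v *)
From Stdlib Require Import Reals.
Open Scope R_scope.

Definition csc (x : R) : R := / sin x.

(* Main.v *)
Require Import Defs.
From Stdlib Require Import Reals Lra Lia List.
Open Scope R_scope.
Definition E (f : nat -> R) (d : nat) (x : R) : R := sum_f_R0 (fun k => f k * x ^ k) d.
Fixpoint qd (P : nat -> R) (u : R) (k : nat) : R :=
  match k with O => P O | S k' => P (S k') + u * qd P u k' end.
Lemma E_div P u x d : E P d x = (1 - u*x) * E (qd P u) d x + u * x ^ (S d) * qd P u d.
Proof.
  unfold E; induction d as [|d IH]; simpl.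
  - ring.
  - rewrite IH. simpl. ring.
Qed.
Definition ps (k : nat) (rs : list R) : R := fold_right (fun r acc => (/ r) ^ k + acc) 0 rs.

Lemma newton4 : forall rs P, NoDup rs ->
  (forall r, In r rs -> r <> 0 /\ E P (length rs) r = 0) -> P 0%nat = 1 ->
  (forall k, (length rs < k)%nat -> P k = 0) ->
  ps 1 rs = - P 1%nat /\ ps 2 rs = P 1%nat ^ 2 - 2 * P 2%nat /\
  ps 3 rs = - P 1%nat ^ 3 + 3 * P 1%nat * P 2%nat - 3 * P 3%nat /\
  ps 4 rs = P 1%nat ^ 4 - 4 * P 1%nat ^ 2 * P 2%nat + 2 * P 2%nat ^ 2
            + 4 * P 1%nat * P 3%nat - 4 * P 4%nat.
Proof.
  induction rs as [|r rs IH]; intros P Hnd Hr H0 Hdeg.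
  - simpl in Hdeg. rewrite !Hdeg by lia. simpl. repeat split; ring.
  - simpl length in *.
    set (m := length rs) in *.
    inversion Hnd as [|? ? Hnin Hnd']; subst.
    destruct (Hr r (or_introl eq_refl)) as [Hr0 HrE].
    set (u := / r).
    set (Q := qd P u).
    assert (Hur : u * r = 1) by (unfold u; field; auto).
    assert (HQd : Q (S m) = 0).
    { pose proof (E_div P u r (S m)) as HD. fold Q in HD. rewrite HrE, Hur in HD.
      assert (u * r ^ S (S m) * Q (S m) = 0) as HH by lra.
      apply Rmult_integral in HH. destruct HH as [HH|HH]; auto.
      apply Rmult_integral in HH. destruct HH as [HH|HH].
      - rewrite HH in Hur; lra.
      - exfalso; apply (pow_nonzero r (S (S m))); auto. }
    assert (HQz : forall j, Q (S m + j)%nat = 0).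
    { induction j. rewrite Nat.add_0_r; auto.
      replace (S m + S j)%nat with (S (S m + j)) by lia.
      unfold Q; cbn [qd]. fold Q. rewrite IHj, Hdeg by lia. ring. }
    assert (HQ : forall k, P (S k) = Q (S k) - u * Q k).
    { intro k. unfold Q; simpl. ring. }
    destruct (IH Q Hnd') as (I1 & I2 & I3 & I4).
    + intros r' Hin. destruct (Hr r' (or_intror Hin)) as [Hr0' HE].
      split; auto.
      pose proof (E_div P u r' (S m)) as HD. fold Q in HD.
      rewrite HE, HQd in HD.
      assert (Hne : 1 - u * r' <> 0).
      { intro Hc. apply Hnin. replace r with r'; auto.
        assert (u * r' = u * r) by lra. apply Rmult_eq_reg_l in H; auto.
        intro Hu; rewrite Hu in Hur; lra. }
      unfold E in HD. simpl in HD. fold (E Q m r') in HD.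
      rewrite HQd in HD.
      assert ((1 - u*r') * E Q m r' = 0) by lra.
      apply Rmult_integral in H. destruct H; [contradiction|auto].
    + unfold Q; simpl; auto.
    + intros k Hk. replace k with (S m + (k - S m))%nat by lia. apply HQz.
    + assert (HQ0 : Q 0%nat = 1) by (unfold Q; simpl; auto).
      rewrite (HQ 0%nat), (HQ 1%nat), (HQ 2%nat), (HQ 3%nat), HQ0.
      simpl ps. fold (ps 1 rs) (ps 2 rs) (ps 3 rs) (ps 4 rs). fold u.
      rewrite I1, I2, I3, I4.
      repeat split; ring.
Qed.
Definition shift (f : nat -> R) (k : nat) : R := match k with O => 0 | S k' => f k' end.
Definition c0 (k : nat) : R := match k with O => 1 | _ => 0 end.
Definition c1 (k : nat) : R := match k with O => 3 | 1%nat => -4 | _ => 0 end.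
Fixpoint cc (n : nat) : (nat -> R) * (nat -> R) :=
  match n with
  | O => (c0, c1)
  | S n' => let (a, b) := cc n' in (b, fun k => 2 * b k - 4 * shift b k - a k)
  end.
Definition c n := fst (cc n).
Lemma c_rec n k : c (S (S n)) k = 2 * c (S n) k - 4 * shift (c (S n)) k - c n k.
Proof. unfold c. simpl. destruct (cc n). simpl. reflexivity. Qed.
Lemma c_0 k : c 0 k = c0 k. Proof. reflexivity. Qed.
Lemma c_1 k : c 1 k = c1 k. Proof. reflexivity. Qed.

Lemma c_deg : forall n k, (n < k)%nat -> c n k = 0.
Proof.
  assert (forall n, (forall k, (n < k)%nat -> c n k = 0) /\ (forall k, (S n < k)%nat -> c (S n) k = 0)).
  { induction n as [|n [IH1 IH2]].
    - split; intros k Hk; [rewrite c_0|rewrite c_1]; destruct k as [|[|k]]; simpl; try lia; auto.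
    - split; auto. intros k Hk. rewrite c_rec. destruct k as [|k]; [lia|]. simpl shift.
      rewrite IH1, !IH2 by lia. ring. }
  intros n k; apply H.
Qed.

Lemma E_S f d x : E f (S d) x = E f d x + f (S d) * x ^ S d.
Proof. reflexivity. Qed.
Lemma E_shift f d x : E (shift f) (S d) x = x * E f d x.
Proof. unfold E. induction d; simpl in *. ring. rewrite IHd. simpl. ring. Qed.
Lemma E_ext f g d x : (forall k, f k = g k) -> E f d x = E g d x.
Proof. intros H. unfold E. induction d; simpl; rewrite ?IHd, H; auto. Qed.
Lemma E_lin f g h d x : E (fun k => 2 * f k - 4 * g k - h k) d x = 2 * E f d x - 4 * E g d x - E h d x.
Proof. unfold E. induction d; simpl in *. ring. rewrite IHd. ring. Qed.

Lemma trig_rec a t : sin (a + 2 * t) = 2 * (1 - 2 * sin t ^ 2) * sin a - sin (a - 2 * t).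
Proof.
  rewrite sin_plus, sin_minus. rewrite cos_2a_sin. ring.
Qed.

Lemma c_eval : forall n t, sin (INR (2 * n + 1) * t) = sin t * E (c n) n (sin t ^ 2).
Proof.
  assert (forall n t, sin (INR (2 * n + 1) * t) = sin t * E (c n) n (sin t ^ 2) /\
              sin (INR (2 * S n + 1) * t) = sin t * E (c (S n)) (S n) (sin t ^ 2)).
  { induction n as [|n IH]; intro t.
    - split.
      + unfold E; simpl. rewrite c_0; simpl. rewrite Rmult_1_l. ring.
      + unfold E; simpl. rewrite !c_1. simpl.
        replace (1 + 1 + 1) with 3 by ring. replace (3 * t) with (t + 2 * t) by ring.
        rewrite trig_rec. replace (t - 2 * t) with (- t) by ring. rewrite sin_neg. change (c 1 1) with (-4). ring.
    - destruct (IH t) as [H1 H2]. split; auto.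
      replace (INR (2 * S (S n) + 1) * t) with (INR (2 * S n + 1) * t + 2 * t)
        by (rewrite !plus_INR, !mult_INR, !S_INR; simpl; ring).
      rewrite trig_rec.
      replace (INR (2 * S n + 1) * t - 2 * t) with (INR (2 * n + 1) * t)
        by (rewrite !plus_INR, !mult_INR, !S_INR; simpl; ring).
      rewrite H1, H2.
      rewrite (E_ext _ _ _ _ (c_rec n)), E_lin, E_shift.
      rewrite (E_S (c (S n)) (S n)), (c_deg (S n) (S (S n))) by lia.
      rewrite (E_S (c n) (S n)), (c_deg n (S (S n))) by lia.
      rewrite (E_S (c n) n), (c_deg n (S n)) by lia.
      ring. }
  intros; apply H.
Qed.
Definition NN n := 2 * INR n + 1.
Lemma c_closed : forall n,
  c n 0 = NN n /\
  c n 1 = - NN n * (NN n ^ 2 - 1) / 6 /\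
  c n 2 = NN n * (NN n ^ 2 - 1) * (NN n ^ 2 - 9) / 120 /\
  c n 3 = - NN n * (NN n ^ 2 - 1) * (NN n ^ 2 - 9) * (NN n ^ 2 - 25) / 5040 /\
  c n 4 = NN n * (NN n ^ 2 - 1) * (NN n ^ 2 - 9) * (NN n ^ 2 - 25) * (NN n ^ 2 - 49) / 362880.
Proof.
  assert (forall n, (c n 0 = NN n /\
  c n 1 = - NN n * (NN n ^ 2 - 1) / 6 /\
  c n 2 = NN n * (NN n ^ 2 - 1) * (NN n ^ 2 - 9) / 120 /\
  c n 3 = - NN n * (NN n ^ 2 - 1) * (NN n ^ 2 - 9) * (NN n ^ 2 - 25) / 5040 /\
  c n 4 = NN n * (NN n ^ 2 - 1) * (NN n ^ 2 - 9) * (NN n ^ 2 - 25) * (NN n ^ 2 - 49) / 362880) /\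
  (c (S n) 0 = NN (S n) /\
  c (S n) 1 = - NN (S n) * (NN (S n) ^ 2 - 1) / 6 /\
  c (S n) 2 = NN (S n) * (NN (S n) ^ 2 - 1) * (NN (S n) ^ 2 - 9) / 120 /\
  c (S n) 3 = - NN (S n) * (NN (S n) ^ 2 - 1) * (NN (S n) ^ 2 - 9) * (NN (S n) ^ 2 - 25) / 5040 /\
  c (S n) 4 = NN (S n) * (NN (S n) ^ 2 - 1) * (NN (S n) ^ 2 - 9) * (NN (S n) ^ 2 - 25) * (NN (S n) ^ 2 - 49) / 362880)).
  { induction n as [|n [IH1 IH2]].
    - unfold NN, c; simpl. repeat split; field.
    - split; auto.
      destruct IH1 as (A0 & A1 & A2 & A3 & A4).
      destruct IH2 as (B0 & B1 & B2 & B3 & B4).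
      rewrite !c_rec. simpl shift. rewrite A0, A1, A2, A3, A4, B0, B1, B2, B3, B4.
      unfold NN. rewrite !S_INR. repeat split; field. }
  intro n; apply H.
Qed.

Fixpoint L (f : nat -> R) (m : nat) : list R :=
  match m with O => nil | S m' => f m' :: L f m' end.
Lemma L_len f m : length (L f m) = m.
Proof. induction m; simpl; auto. Qed.
Lemma L_in f m x : In x (L f m) -> exists k, (k < m)%nat /\ x = f k.
Proof.
  induction m; simpl; [tauto|]. intros [H|H].
  - exists m; split; auto.
  - destruct (IHm H) as (k & Hk & ->). exists k; split; auto.
Qed.
Lemma L_nodup f m : (forall i j, (i < j < m)%nat -> f i <> f j) -> NoDup (L f m).
Proof.
  induction m; intros H; simpl; constructor.
  - intro Hin. destruct (L_in _ _ _ Hin) as (k & Hk & Heq).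
    apply (H k m); auto.
  - apply IHm. intros i j Hij. apply H. lia.
Qed.
Lemma L_ps f m : ps 4 (L f (S m)) = sum_f_R0 (fun k => (/ f k) ^ 4) m.
Proof.
  induction m. simpl. ring.
  change (ps 4 (L f (S (S m)))) with ((/ f (S m)) ^ 4 + ps 4 (L f (S m))).
  rewrite IHm. simpl. ring.
Qed.
Lemma E_scale f a d x : E (fun k => f k / a) d x = E f d x / a.
Proof. unfold E, Rdiv. induction d; simpl in *. ring. rewrite IHd. ring. Qed.

Theorem mainTheorem14 (n : nat) (hn : (1 <= n)%nat) :
  sum_f_R0 (fun k => (csc (PI * INR (S k) / (2 * INR n + 1))) ^ 8) (Nat.pred n)
  = 128 * (INR n + 1) * INR n * (INR n ^ 2 + INR n + 3)
    * (3 * INR n ^ 4 + 6 * INR n ^ 3 + 7 * INR n ^ 2 + 4 * INR n + 15) / 14175.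
Proof.
  destruct n as [|m]; [lia|]. simpl Nat.pred.
  set (N := S m).
  assert (HNpos : 0 < 2 * INR N + 1) by (pose proof (pos_INR N); lra).
  set (th := fun k => PI * INR (S k) / (2 * INR N + 1)).
  assert (Hth : forall k, (k < N)%nat -> 0 < th k < PI / 2).
  { intros k Hk. unfold th. pose proof PI_RGT_0.
    assert (HS : INR (S k) <= INR N) by (apply le_INR; lia).
    assert (0 < INR (S k)) by (apply lt_0_INR; lia).
    split. apply Rdiv_lt_0_compat; auto. apply Rmult_lt_0_compat; auto.
    apply (Rmult_lt_reg_r (2 * INR N + 1)); auto. unfold Rdiv.
    rewrite Rmult_assoc, Rinv_l by lra. nra. }
  assert (Hsin : forall k, (k < N)%nat -> 0 < sin (th k)).
  { intros k Hk. destruct (Hth k Hk). apply sin_gt_0; lra. }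
  set (f := fun k => sin (th k) ^ 2).
  transitivity (sum_f_R0 (fun k => (/ f k) ^ 4) m).
  { apply sum_eq. intros k Hk. unfold csc, f. fold (th k).
    assert (sin (th k) <> 0) by (pose proof (Hsin k ltac:(unfold N; lia)); lra).
    field; auto. }
  rewrite <- L_ps. change (L f (S m)) with (L f N).
  set (P := fun k => c N k / NN N).
  assert (HNN : NN N <> 0) by (unfold NN; lra).
  destruct (newton4 (L f N) P) as (_ & _ & _ & H4).
  - apply L_nodup. intros i j Hij. unfold f.
    assert (sin (th i) < sin (th j)).
    { destruct (Hth i ltac:(lia)), (Hth j ltac:(lia)).
      apply sin_increasing_1; try lra.
      unfold th, Rdiv. apply Rmult_lt_compat_r. apply Rinv_0_lt_compat; auto.
      apply Rmult_lt_compat_l. apply PI_RGT_0. apply lt_INR; lia. }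
    pose proof (Hsin i ltac:(lia)). nra.
  - intros r Hin. destruct (L_in _ _ _ Hin) as (k & Hk & ->).
    rewrite L_len. split.
    + unfold f. pose proof (Hsin k Hk). apply pow_nonzero; lra.
    + unfold P. rewrite E_scale. unfold f.
      pose proof (c_eval N (th k)) as He.
      assert (Hz : sin (INR (2 * N + 1) * th k) = 0).
      { apply sin_eq_0_1. exists (Z.of_nat (S k)). rewrite <- INR_IZR_INZ.
        unfold th. rewrite plus_INR, mult_INR. simpl (INR 2). simpl (INR 1). field. lra. }
      rewrite Hz in He. pose proof (Hsin k Hk).
      assert (E (c N) N (sin (th k) ^ 2) = 0).
      { symmetry in He. apply Rmult_integral in He. destruct He; auto. lra. }
      rewrite H0. unfold Rdiv; ring.
  - unfold P. destruct (c_closed N) as (-> & _). field; auto.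
  - intros k Hk. rewrite L_len in Hk. unfold P. rewrite c_deg by auto. unfold Rdiv; ring.
  - rewrite H4. unfold P. destruct (c_closed N) as (A0 & A1 & A2 & A3 & A4).
    rewrite A1, A2, A3, A4. unfold NN in *. field. auto.
Qed.
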